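(* For a magma $M$ the following are equivalent: (1) $M$ is equidecomposable and graded; (2) $M$ is equidecomposable and semigraded; (3) $M$ is equidecomposable and initial; (4) $M$ is free.
   Context: A magma is a set $M$ with a binary operation $+$. $M$ is equidecomposable if $x+y=x'+y'$ implies $x=x'$ and $y=y'$. $\mathbb{N}$ denotes the positive integers. $M$ is graded if there is $\ell:M\to\mathbb{N}$ with $\ell(x+y)=\ell(x)+\ell(y)$; $M$ is semigraded if there is $\mu:M\to\mathbb{N}$ with $\mu(x+y)>\mu(x),\mu(y)$. The initial part $\mathfrak{I}(M)$ is the submagma generated by the indecomposable elements $M\setminus(M+M)$, and $M$ is initial if $\mathfrak{I}(M)=M$. $M$ is free if it is isomorphic to the free magma $\mathbb{M}_A$ (non-associative words over a non-empty set $A$ with $x+y=(x,y)$) for some $A$. *)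

(* Defs.v *)
(* The free magma M_A: non-associative words over A, with x + y = (x, y). *)
Inductive word (A : Type) : Type :=
  | wleaf : A -> word A
  | wnode : word A -> word A -> word A.
Arguments wleaf {A} _.
Arguments wnode {A} _ _.

Section Magma.
Variable M : Type.
Variable op : M -> M -> M.

Definition equidecomposable : Prop :=
  forall x y x' y', op x y = op x' y' -> x = x' /\ y = y'.

Definition graded : Prop :=
  exists l : M -> nat,
    (forall x, 0 < l x) /\ (forall x y, l (op x y) = l x + l y).

Definition semigraded : Prop :=
  exists mu : M -> nat,
    (forall x, 0 < mu x) /\ (forall x y, mu x < mu (op x y) /\ mu y < mu (op x y)).

Definition indecomposable (x : M) : Prop := ~ exists a b, op a b = x.

Inductive initial_part : M -> Prop :=
  | ip_gen : forall x, indecomposable x -> initial_part x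
  | ip_op : forall x y, initial_part x -> initial_part y -> initial_part (op x y).

Definition initial : Prop := forall x, initial_part x.

Definition free_magma : Prop :=
  exists (A : Type), inhabited A /\
    exists f : M -> word A,
      (forall x y, f x = f y -> x = y) /\
      (forall w, exists x, f x = w) /\
      (forall x y, f (op x y) = wnode (f x) (f y)).
End Magma.
Arguments equidecomposable {M} op.
Arguments graded {M} op.
Arguments semigraded {M} op.
Arguments initial {M} op.
Arguments free_magma {M} op.
Arguments initial_part {M} op _.
Arguments indecomposable {M} op _.

(* Main.v *)
Require Import Defs.
From Stdlib Require Import Lia ProofIrrelevance ClassicalEpsilon Arith.

Fixpoint wsize {A} (w : word A) : nat :=
  match w with wleaf _ => 1 | wnode a b => wsize a + wsize b end.

Lemma wsize_pos {A} (w : word A) : 0 < wsize w.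
Proof. induction w; simpl; lia. Qed.

Section S.
Variable M : Type.
Variable op : M -> M -> M.

Lemma F_EG : free_magma op -> equidecomposable op /\ graded op.
Proof.
  intros [A [_ [f [fi [fs fh]]]]]. split.
  - intros x y x' y' H. apply (f_equal f) in H. rewrite !fh in H.
    injection H; intros; split; auto.
  - exists (fun x => wsize (f x)). split.
    + intros; apply wsize_pos.
    + intros; rewrite fh; reflexivity.
Qed.

Lemma EG_ES : graded op -> semigraded op.
Proof.
  intros [l [lp lh]]. exists l. split; auto. intros x y; rewrite lh.
  pose proof (lp x); pose proof (lp y); lia.
Qed.

Lemma S_I : semigraded op -> initial op.
Proof.
  intros [mu [_ mh]] x.
  remember (mu x) as n. revert x Heqn.
  induction n as [n IH] using lt_wf_ind. intros x Hn.
  destruct (classic (exists a b, op a b = x)) as [[a [b E]]|H].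
  - subst x. destruct (mh a b). apply ip_op; eapply IH; eauto; lia.
  - apply ip_gen; exact H.
Qed.

Lemma F_EI : free_magma op -> equidecomposable op /\ initial op.
Proof.
  intros HF. destruct (F_EG HF) as [HE _]. split; auto.
  destruct HF as [A [_ [f [fi [fs fh]]]]].
  intro x. remember (f x) as w. revert x Heqw.
  induction w; intros x Hx.
  - apply ip_gen. intros [a0 [b E]]. subst x. rewrite fh in Hx. discriminate.
  - destruct (fs w1) as [x1 H1]. destruct (fs w2) as [x2 H2].
    assert (x = op x1 x2) by (apply fi; rewrite fh; congruence).
    subst x. apply ip_op; auto.
Qed.

Definition IA := { x : M | indecomposable op x }.

Fixpoint g (w : word IA) : M :=
  match w with wleaf a => proj1_sig a | wnode a b => op (g a) (g b) end.

Lemma EI_F : inhabited M -> equidecomposable op -> initial op -> free_magma op.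
Proof.
  intros [m] HE HI.
  assert (Hinj : forall w1 w2, g w1 = g w2 -> w1 = w2).
  { induction w1 as [a|u1 IH1 u2 IH2]; destruct w2 as [b|v1 v2]; simpl; intro H.
    - destruct a, b; simpl in H; subst. f_equal. f_equal. apply proof_irrelevance.
    - destruct a as [a Ha]; simpl in H. exfalso; apply Ha; eauto.
    - destruct b as [b Hb]; simpl in H. exfalso; apply Hb; eauto.
    - destruct (HE _ _ _ _ H). f_equal; auto. }
  assert (Hsurj : forall x, exists w, g w = x).
  { intro x. induction (HI x) as [x Hx|x y _ [u Hu] _ [v Hv]].
    - exists (wleaf (exist _ x Hx)); reflexivity.
    - exists (wnode u v); simpl; congruence. }
  exists IA. split.
  - induction (HI m) as [x Hx|x y _ IH _ _]; [exact (inhabits (exist _ x Hx))|exact IH].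
  - set (f := fun x => proj1_sig (constructive_indefinite_description _ (Hsurj x))).
    assert (Hf : forall x, g (f x) = x).
    { intro x; unfold f; destruct (constructive_indefinite_description _ _); auto. }
    exists f. split; [|split].
    + intros x y H. rewrite <- (Hf x), <- (Hf y), H; reflexivity.
    + intro w. exists (g w). apply Hinj. apply Hf.
    + intros x y. apply Hinj. simpl. rewrite !Hf. reflexivity.
Qed.
End S.

Theorem theorem4p8 (M : Type) (op : M -> M -> M) (HM : inhabited M) :
  ((equidecomposable op /\ graded op) <-> (equidecomposable op /\ semigraded op)) /\
  ((equidecomposable op /\ semigraded op) <-> (equidecomposable op /\ initial op)) /\
  ((equidecomposable op /\ initial op) <-> free_magma op).
Proof.
  assert (A1 : equidecomposable op /\ initial op -> free_magma op)
    by (intros [E I]; apply EI_F; auto).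
  pose proof (@F_EG M op) as A2. pose proof (@F_EI M op) as A3.
  split; [|split].
  - split; intros [E G]; split; auto.
    + apply EG_ES; auto.
    + apply A2, A1; split; auto; apply S_I; auto.
  - split; intros [E G]; split; auto.
    + apply S_I; auto.
    + apply EG_ES, A2, A1; split; auto.
  - split; auto.
Qed.
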